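(* Let $n\ge 2$ be an integer and $0\le n_1\le n$. For $p\in(0.5,1]$, $q=1-p$ and $\rho\in[-1,1]$ define $$h(p,\rho)=\frac{pq}{(p-q)^2}\left(n+\frac{\rho\left((2n_1-n)^2-n\right)}{n-1}\right).$$ Then (i) $h(p,\rho)$ is monotonically increasing with respect to $\rho$ if $n_1/n\le \frac12-\frac{1}{2\sqrt n}$ or $n_1/n\ge \frac12+\frac{1}{2\sqrt n}$, and monotonically decreasing with respect to $\rho$ if $\frac12-\frac{1}{2\sqrt n}<n_1/n<\frac12+\frac{1}{2\sqrt n}$; (ii) $h(p,\rho)$ is monotonically decreasing with respect to $p\in(0.5,1]$.
   Context: $h(p,\rho)$ is the variance of the JRR frequency estimator; monotonicity in $\rho$ is for fixed $p$ and in $p$ for fixed $\rho$ (monotone in the non-strict sense where the coefficient of $\rho$ vanishes). *)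

(* Defs.v *)
From mathcomp Require Import all_boot all_order all_algebra.
Set Implicit Arguments. Unset Strict Implicit. Unset Printing Implicit Defensive.
Import Order.TTheory GRing.Theory Num.Theory.
Local Open Scope ring_scope.

Definition h (R : fieldType) (n n1 : nat) (p rho : R) : R :=
  let q := 1 - p in
  p * q / (p - q) ^+ 2 *
  (n%:R + rho * ((2 * n1%:R - n%:R) ^+ 2 - n%:R) / (n%:R - 1)).

(* Main.v *)
Require Import Defs.
From mathcomp Require Import all_boot all_order all_algebra.
From mathcomp Require Import ring lra.
Import Order.TTheory GRing.Theory Num.Theory.
Local Open Scope ring_scope.

Lemma A_dec (R : rcfType) (p1 p2 : R) : 2^-1 < p1 -> p1 <= p2 -> p2 <= 1 ->
  p2 * (1 - p2) / (p2 - (1 - p2)) ^+ 2 <= p1 * (1 - p1) / (p1 - (1 - p1)) ^+ 2.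
Proof.
move=> h1 h12 h2.
have t1 : 0 < p1 - (1 - p1) by lra.
have t2 : 0 < p2 - (1 - p2) by lra.
rewrite ler_pdivrMr ?exprn_gt0 // mulrAC ler_pdivlMr ?exprn_gt0 //.
nra.
Qed.

Lemma A_ge0 (R : rcfType) (p : R) : 2^-1 < p -> p <= 1 ->
  0 <= p * (1 - p) / (p - (1 - p)) ^+ 2.
Proof.
move=> h1 h2.
apply: divr_ge0; last exact: sqr_ge0.
nra.
Qed.

Arguments A_ge0 {R p}.
Arguments A_dec {R p1 p2}.

Theorem theorem4 (R : rcfType) (n n1 : nat) :
  (2 <= n)%N -> (n1 <= n)%N ->
  (* (i) increasing in rho outside the central window *)
  ((n1%:R / n%:R <= 2^-1 - (2 * Num.sqrt (n%:R : R))^-1 \/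
    2^-1 + (2 * Num.sqrt (n%:R : R))^-1 <= n1%:R / n%:R) ->
   forall p : R, 2^-1 < p -> p <= 1 ->
   forall r1 r2 : R, -1 <= r1 -> r1 <= r2 -> r2 <= 1 ->
   h n n1 p r1 <= h n n1 p r2)
  /\
  (* (i) decreasing in rho inside the central window *)
  (2^-1 - (2 * Num.sqrt (n%:R : R))^-1 < n1%:R / n%:R ->
   n1%:R / n%:R < 2^-1 + (2 * Num.sqrt (n%:R : R))^-1 ->
   forall p : R, 2^-1 < p -> p <= 1 ->
   forall r1 r2 : R, -1 <= r1 -> r1 <= r2 -> r2 <= 1 ->
   h n n1 p r2 <= h n n1 p r1)
  /\
  (* (ii) decreasing in p on (1/2, 1] *)
  (forall rho : R, -1 <= rho -> rho <= 1 ->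
   forall p1 p2 : R, 2^-1 < p1 -> p1 <= p2 -> p2 <= 1 ->
   h n n1 p2 rho <= h n n1 p1 rho).
Proof.
move=> hn hn1.
rewrite /h.
set N : R := n%:R. set M : R := n1%:R.
have N2 : 2 <= N by rewrite /N (ler_nat R 2 n).
have MN : M <= N by rewrite /M /N ler_nat.
have M0 : 0 <= M by rewrite /M ler0n.
set s : R := Num.sqrt N.
have s0 : 0 < s by rewrite sqrtr_gt0; lra.
have ss : s * s = N by rewrite -expr2 sqr_sqrtr //; lra.
have hu : (2 * s)^-1 * (2 * s) = 1 by rewrite mulVf // mulf_neq0 // gt_eqF.
have hv : N^-1 * N = 1 by rewrite mulVf //; apply/negP=>/eqP; lra.
have hd : 0 < (N - 1)^-1 by rewrite invr_gt0; lra.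
set d := (N - 1)^-1 in hd *.
have u0 : 0 < (2 * s)^-1 by rewrite invr_gt0; nra.
set u : R := (2 * s)^-1 in hu u0 *.
have Mv : M * N^-1 * N = M by rewrite -mulrA hv mulr1.
set a := M * N^-1 in Mv *.
set C := (2 * M - N) ^+ 2 - N.
have Hout : a <= 2^-1 - u \/ 2^-1 + u <= a -> 0 <= C.
  move=> H.
  have Hx : (2 * M - N) * s <= - N \/ N <= (2 * M - N) * s.
    case: H => H; [left|right].
    - have : (2 * a - 1) * s <= - 1 by nra.
      rewrite -Mv; nra.
    - have : 1 <= (2 * a - 1) * s by nra.
      rewrite -Mv; nra.
  rewrite /C; case: Hx => Hx; nra.
have Hin : 2^-1 - u < a -> a < 2^-1 + u -> C < 0.
  move=> H1 H2.
  have Y1 : 0 < (a - (2^-1 - u)) * s by apply: mulr_gt0; lra.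
  have Y2 : 0 < (2^-1 + u - a) * s by apply: mulr_gt0; lra.
  have : -1 < (2 * a - 1) * s by lra.
  have : (2 * a - 1) * s < 1 by lra.
  move=> X1 X2.
  have Z : ((2 * a - 1) * s) ^+ 2 < 1 by nra.
  have Z2 : ((2 * a - 1) * s) ^+ 2 * N < N by nra.
  rewrite /C -Mv.
  have -> : (2 * (a * N) - N) ^+ 2 = ((2 * a - 1) * s) ^+ 2 * N.
    have sq : s ^+ 2 = N by rewrite expr2.
    by rewrite -sq; ring.
  lra.
split; [|split].
- move=> /Hout HC p hp1 hp2 r1 r2 hr1 hr12 hr2.
  have := A_ge0 hp1 hp2.
  set A := (X in X * _ <= _).
  move=> HA.
  apply: ler_wpM2l => //; rewrite lerD2l; apply: ler_wpM2r; first exact: ltW.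
  exact: ler_wpM2r.
- move=> H1 H2; have HC := Hin H1 H2 => p hp1 hp2 r1 r2 hr1 hr12 hr2.
  have := A_ge0 hp1 hp2.
  set A := (X in X * _ <= _).
  move=> HA.
  apply: ler_wpM2l => //; rewrite lerD2l; apply: ler_wpM2r; first exact: ltW.
  apply: ler_wnM2r => //; exact: ltW.
- move=> rho hr1 hr2 p1 p2 hp1 hp12 hp2.
  have HA := A_dec hp1 hp12 hp2.
  have HA2 := A_ge0 (lt_le_trans hp1 hp12) hp2.
  have HB : 0 <= N + rho * C * d.
    have C1 : - N <= C by rewrite /C; have := sqr_ge0 (2 * M - N); lra.
    have C2 : C <= N * (N - 1).
      have : 0 <= (N - M) * M by apply: mulr_ge0; lra.
      rewrite /C; nra.
    have dN : d * (N - 1) = 1 by rewrite mulVf //; apply/negP=>/eqP; lra.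
    have d1 : d <= 1.
      have : 0 <= d * (N - 2) by apply: mulr_ge0; lra.
      lra.
    have [Cp|Cn] := lerP 0 C.
    - have X1 : 0 <= (rho * C + C) * d.
        apply: mulr_ge0; last lra.
        have : 0 <= (rho + 1) * C by apply: mulr_ge0; lra.
        lra.
      have X2 : 0 <= (N * (N - 1) - C) * d by apply: mulr_ge0; lra.
      have X3 : N * (N - 1) * d = N by rewrite -mulrA [(N - 1) * d]mulrC dN mulr1.
      lra.
    - have X1 : 0 <= (rho * C - C) * d.
        apply: mulr_ge0; last lra.
        have : 0 <= (1 - rho) * (- C) by apply: mulr_ge0; lra.
        lra.
      have X2 : 0 <= (C + N) * d by apply: mulr_ge0; lra.
      have X3 : 0 <= N * (1 - d) by apply: mulr_ge0; lra.
      lra.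
  apply: ler_wpM2r => //.
Qed.
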